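(* Let $V:\mathbb{R}^d\to\mathbb{R}$ be of class $\mathcal{C}^4$, let $z=0$ be a stationary point with $V(0)=0$, and choose coordinates in which $\nabla^2V(0)=\operatorname{diag}(0,\lambda_2,\dots,\lambda_d)$, where $\lambda_2\neq0$ (of either sign) and $\lambda_3,\dots,\lambda_d>0$. Then there exists a polynomial change of variables $x=y+g(y)$, where $g$ is a polynomial with terms of degree $2$ and $3$, such that $$V(y+g(y))=\frac12\sum_{i=2}^d\lambda_iy_i^2+C_3y_1^3+C_4y_1^4+o(\|y\|^4),$$ where $C_3=V_{111}$ and $C_4=V_{1111}-\frac12\sum_{j=2}^d\frac{V_{11j}^2}{\lambda_j}$.
   Context: For indices $i_1\le\dots\le i_r$ in $\{1,\dots,d\}$, $V_{i_1\dots i_r}=\frac{1}{n_1!\cdots n_d!}\frac{\partial}{\partial x_{i_1}}\cdots\frac{\partial}{\partial x_{i_r}}V(0)$ with $n_j=\#\{k:i_k=j\}$; thus $V_{111}=\frac16\partial_1^3V(0)$, $V_{1111}=\frac1{24}\partial_1^4V(0)$ and $V_{11j}=\frac12\partial_1^2\partial_jV(0)$ for $j\ge2$. *)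

(* Defs.v *)
From HB Require Import structures.
From mathcomp Require Import all_boot all_order all_algebra.
From mathcomp Require Import all_classical all_reals all_analysis.
Set Implicit Arguments. Unset Strict Implicit. Unset Printing Implicit Defensive.
Import Order.TTheory GRing.Theory Num.Theory.
Import numFieldNormedType.Exports.
Local Open Scope ring_scope.

Definition evec (R : realType) (d : nat) (i : 'I_d) : 'rV[R]_d := delta_mx 0 i.

Definition partial (R : realType) (d : nat) (i : 'I_d) (f : 'rV[R]_d -> R)
  : 'rV[R]_d -> R := fun x => 'D_(evec R i) f x.

Fixpoint Ck (R : realType) (d : nat) (k : nat) (f : 'rV[R]_d -> R) : Prop :=
  match k with
  | 0%N => continuous f
  | k'.+1 => continuous f /\
      forall i : 'I_d, (forall x, derivable f x (evec R i)) /\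
                       Ck k' (partial i f)
  end.

(* Main.v *)
Require Import Defs.
From HB Require Import structures.
From mathcomp Require Import all_boot all_order all_algebra.
From mathcomp Require Import all_classical all_reals all_analysis.
From mathcomp Require Import ring lra zify.
Import Order.TTheory GRing.Theory Num.Theory.
Import numFieldNormedType.Exports.
Local Open Scope ring_scope.

Section Rows.
Context {R : realType} {N : nat}.
Implicit Types x y : 'rV[R]_N.

Lemma coord_le x i : `|x 0 i| <= `|x|.
Proof.
have -> : `|x| = mx_norm x by [].
rewrite mx_normrE.
exact: (le_bigmax _ (fun ij : 'I_1 * 'I_N => `|x ij.1 ij.2|) (0,i)).
Qed.

Lemma norm_le x c : 0 <= c -> (forall i, `|x 0 i| <= c) -> `|x| <= c.
Proof.
move=> c0 H; have -> : `|x| = mx_norm x by [].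
rewrite mx_normrE; apply/bigmax_leP; split=> // -[a b] _ /=.
by rewrite (ord1 a).
Qed.

Lemma norm_mono x y : (forall i, `|x 0 i| <= `|y 0 i|) -> `|x| <= `|y|.
Proof.
move=> H; apply: norm_le => // i; exact: le_trans (H i) (coord_le _ _).
Qed.

Lemma evecE (k j : 'I_N) : evec R k 0 j = (j == k)%:R.
Proof. by rewrite /evec mxE eqxx. Qed.

Lemma seg (f : 'rV[R]_N -> R) k (p : 'rV[R]_N) t :
  (forall z, derivable f z (evec R k)) ->
  exists s, `|s| <= `|t| /\
    f (p + t *: evec R k) - f p = t * partial k f (p + s *: evec R k).
Proof.
move=> df.
pose phi := fun tau : R => f (p + tau *: evec R k).
have E tau : (fun h : R => h^-1 *: ((phi \o shift tau) (h *: 1) - phi tau)) =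
   (fun h : R => h^-1 *: ((f \o shift (p + tau *: evec R k)) (h *: evec R k)
        - f (p + tau *: evec R k))).
  apply/funext => h /=; rewrite /phi /shift /=.
  by rewrite [h *: 1]mulr1 scalerDl addrCA addrA.
have D (tau : R) : is_derive tau (1:R) phi (partial k f (p + tau *: evec R k)).
  split; first by rewrite /derivable E; exact: df.
  by rewrite /derive E.
have C : continuous phi.
  move=> tau; apply: differentiable_continuous.
  apply/derivable1_diffP; exact: (@ex_derive _ _ _ _ _ _ _ (D tau)).
have phi0 : phi 0 = f p by rewrite /phi scale0r addr0.
case: (leP 0 t) => t0.
  have [c /andP[c0 ct] Hc] := @MVT_segment R phi (fun tau => partial k f (p + tau *: evec R k)) 0 t t0
    (fun tau _ => D tau) (continuous_subspaceT C).
  exists c; split.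
    by rewrite !ger0_norm //; apply: le_trans ct.
  by rewrite -/(phi t) -phi0 Hc subr0 mulrC.
have [c /andP[c0 ct] Hc] := @MVT_segment R phi (fun tau => partial k f (p + tau *: evec R k)) t 0 (ltW t0)
    (fun tau _ => D tau) (continuous_subspaceT C).
exists c; split.
  by rewrite !ler0_norm ?lerN2 // ltW.
rewrite -/(phi t) -phi0 -opprB Hc sub0r mulrN opprK mulrC //.
Qed.

End Rows.

Section Small.
Context {R : realType} {N : nat}.

Definition inS (m : nat) (x : 'rV[R]_N) := forall i : 'I_N, (m <= i)%N -> x 0 i = 0.
Definition small (f : 'rV[R]_N -> R) m r := forall e : R, 0 < e ->
  exists2 d : R, 0 < d & forall z, inS m z -> `|z| < d -> `|f z| <= e * `|z| ^+ r.

Lemma lemA (f : 'rV[R]_N -> R) r m : (m <= N)%N ->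
  (forall k : 'I_N, (k < m)%N -> forall z, derivable f z (evec R k)) -> f 0 = 0 ->
  (forall k : 'I_N, (k < m)%N -> small (partial k f) k.+1 r) -> small f m r.+1.
Proof.
elim: m => [|m IH] mN df f0 sm.
  move=> e e0; exists 1 => // z zS _.
  have -> : z = 0 by apply/matrixP => i j; rewrite (ord1 i) mxE zS.
  by rewrite f0 normr0 mulr_ge0 // ?ltW // exprn_ge0.
have mN' : (m < N)%N by [].
pose k := Ordinal mN'.
have IH' := IH (ltnW mN) (fun k' hk => df k' (ltnW hk)) f0 (fun k' hk => sm k' (ltnW hk)).
move=> e e0.
have e20 : 0 < e / 2 by rewrite divr_gt0.
have [d1 d10 H1] := IH' _ e20.
have [d2 d20 H2] := sm k (ltnSn m) _ e20.
exists (Num.min d1 d2); first by rewrite lt_min d10 d20.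
move=> z zS zd.
have zd1 : `|z| < d1 by apply: lt_le_trans zd _; rewrite ge_min lexx.
have zd2 : `|z| < d2 by apply: lt_le_trans zd _; rewrite ge_min lexx orbT.
pose p := z - z 0 k *: evec R k.
have pE i : p 0 i = if i == k then 0 else z 0 i.
  rewrite /p !mxE eqxx andTb; case: eqP => [->|_]; first by rewrite mulr1 subrr.
  by rewrite mulr0 subr0.
have zp : z = p + z 0 k *: evec R k by rewrite /p subrK.
have [s [sz Hs]] := @seg R N f k p (z 0 k) (df k (ltnSn m)).
pose xi := p + s *: evec R k.
have xiE i : xi 0 i = if i == k then s else z 0 i.
  rewrite /xi mxE pE !mxE eqxx andTb; case: eqP => _; first by rewrite add0r mulr1.
  by rewrite mulr0 addr0.
have pS : inS m p.
  move=> i mi; rewrite pE; case: eqP => // /eqP ik; apply: zS.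
  rewrite ltn_neqAle mi andbT; apply: contraNneq ik => mi'.
  by apply/eqP/val_inj; rewrite /= -mi'.
have xiS : inS m.+1 xi.
  move=> i mi; rewrite xiE; case: eqP => [ik|_]; last exact: zS.
  by move: mi; rewrite ik /= ltnn.
have pz : `|p| <= `|z|.
  by apply: norm_mono => i; rewrite pE; case: eqP => // _; rewrite normr0.
have xiz : `|xi| <= `|z|.
  by apply: norm_mono => i; rewrite xiE; case: eqP => // ->.
have Hp := H1 p pS (le_lt_trans pz zd1).
have Hxi := H2 xi xiS (le_lt_trans xiz zd2).
have -> : f z = f p + z 0 k * partial k f xi.
  by rewrite -Hs -zp addrC subrK.
apply: le_trans (ler_normD _ _) _.
rewrite normrM.
have nz0 : 0 <= `|z| by [].
apply: le_trans (lerD Hp (ler_pM (normr_ge0 _) (normr_ge0 _) (coord_le z k) Hxi)) _.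
have A1 : e / 2 * `|p| ^+ r.+1 <= e / 2 * `|z| ^+ r.+1.
  by apply: ler_wpM2l; [exact: ltW| apply: lerXn2r; rewrite ?nnegrE].
have A2 : `|z| * (e / 2 * `|xi| ^+ r) <= `|z| * (e / 2 * `|z| ^+ r).
  by apply: ler_wpM2l => //; apply: ler_wpM2l; [exact: ltW| apply: lerXn2r; rewrite ?nnegrE].
apply: le_trans (lerD A1 A2) _.
rewrite exprS le_eqVlt; apply/orP; left; apply/eqP; by field.
Qed.

End Small.

Section Der.
Context {R : realType} {N : nat}.
Local Notation rv := ('rV[R]_N).
Implicit Types (f g : rv -> R) (x v : rv).

Lemma dr_crd x j a : is_derive x (evec R j) (fun y : rv => y 0 a) ((a == j)%:R).
Proof.
have E : \forall h \near dnbhs (0:R),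
    h^-1 *: (((fun y : rv => y 0 a) \o shift x) (h *: evec R j) - x 0 a) = (a == j)%:R.
  near=> h.
  have hN0 : h != 0 by near: h; exact: nbhs_dnbhs_neq.
  rewrite /= /shift !mxE eqxx andTb addrK.
  by rewrite /GRing.scale /= mulrA mulVf // mul1r.
split; first exact: (is_cvg_near_cst _ E).
exact: (lim_near_cst _ E).
Unshelve. all: by end_near.
Qed.

Lemma dr_mul f g x v df dg : is_derive x v f df -> is_derive x v g dg ->
  is_derive x v (fun y => f y * g y) (f x * dg + g x * df).
Proof. move=> Hf Hg; exact: (@is_deriveM R rv f g x v df dg Hf Hg). Qed.

Lemma dr_add f g x v df dg : is_derive x v f df -> is_derive x v g dg ->
  is_derive x v (fun y => f y + g y) (df + dg).
Proof. move=> Hf Hg; exact: (@is_deriveD R rv R f g x v df dg Hf Hg). Qed.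

Lemma dr_sub f g x v df dg : is_derive x v f df -> is_derive x v g dg ->
  is_derive x v (fun y => f y - g y) (df - dg).
Proof. move=> Hf Hg; exact: (@is_deriveB R rv R f g x v df dg Hf Hg). Qed.

Lemma dr_scal f x v (k : R) df : is_derive x v f df ->
  is_derive x v (fun y => k * f y) (k * df).
Proof. move=> Hf; exact: (@is_deriveZ R rv R f k x v df Hf). Qed.

Lemma dr_cst x v (k : R) : is_derive x v (fun _ : rv => k) 0.
Proof. exact: (@is_derive_cst R rv R k x v). Qed.

Lemma dr_sum (h : 'I_N -> rv -> R) x v dh :
  (forall i, is_derive x v (h i) (dh i)) ->
  is_derive x v (fun y => \sum_i h i y) (\sum_i dh i).
Proof.
move=> H; have := @is_derive_sum R rv R N h x v dh H.
by rewrite fct_sumE.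
Qed.

Lemma dr_ext f g x v df : (forall y, f y = g y) -> is_derive x v f df -> is_derive x v g df.
Proof. by move=> fg; have -> : f = g by apply/funext. Qed.

Lemma dr_eq f x v df df' : is_derive x v f df -> df = df' -> is_derive x v f df'.
Proof. by move=> ? <-. Qed.

Lemma partialE (i : 'I_N) f x df : is_derive x (evec R i) f df -> partial i f x = df.
Proof. by move=> H; rewrite /partial derive_val. Qed.

Lemma partial_derivable (i : 'I_N) f x df : is_derive x (evec R i) f df -> derivable f x (evec R i).
Proof. by case. Qed.

End Der.

Section Forms.
Context {R : realType} {N : nat}.
Local Notation rv := ('rV[R]_N).
Local Notation I := ('I_N).
Implicit Types (x u v w z : rv).

Definition B1 (c : I -> R) u := \sum_a c a * u 0 a.
Definition B2 (c : I -> I -> R) u v := \sum_a \sum_b c a b * u 0 a * v 0 b.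
Definition B3 (c : I -> I -> I -> R) u v w :=
  \sum_a \sum_b \sum_e c a b e * u 0 a * v 0 b * w 0 e.
Definition B4 (c : I -> I -> I -> I -> R) u v w z :=
  \sum_a \sum_b \sum_e \sum_f c a b e f * u 0 a * v 0 b * w 0 e * z 0 f.

Definition sym2 (c : I -> I -> R) := forall a b, c a b = c b a.
Definition sym3 (c : I -> I -> I -> R) := forall a b e,
  c a b e = c b a e /\ c a b e = c a e b.
Definition sym4 (c : I -> I -> I -> I -> R) := forall a b e f,
  [/\ c a b e f = c b a e f, c a b e f = c a e b f & c a b e f = c a b f e].

Lemma sum_delta (F : I -> R) j : \sum_a (a == j)%:R * F a = F j.
Proof.
rewrite (bigD1 j) //= eqxx mul1r big1 ?addr0 // => a /negbTE ->.
by rewrite mul0r.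
Qed.

Lemma sum_delta' (F : I -> R) j : \sum_a F a * (a == j)%:R = F j.
Proof. rewrite -[RHS](sum_delta F j); apply: eq_bigr => a _; exact: mulrC. Qed.

Lemma dB1 (c : I -> R) x j : is_derive x (evec R j) (fun y => B1 c y) (c j).
Proof.
apply: dr_eq.
  apply: dr_sum => a; apply: dr_scal; exact: dr_crd.
exact: sum_delta'.
Qed.

Lemma dB2 c x j : is_derive x (evec R j) (fun y => B2 c y y)
  (B2 c (evec R j) x + B2 c x (evec R j)).
Proof.
apply: dr_eq.
  apply: dr_sum => a; apply: dr_sum => b; apply: dr_mul.
    apply: dr_scal; exact: dr_crd.
  exact: dr_crd.
rewrite /B2 -big_split; apply: eq_bigr => a _ /=.
rewrite -big_split; apply: eq_bigr => b _ /=.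
rewrite !evecE; ring.
Qed.

Lemma dB3 c x j : is_derive x (evec R j) (fun y => B3 c y y y)
  (B3 c (evec R j) x x + B3 c x (evec R j) x + B3 c x x (evec R j)).
Proof.
apply: dr_eq.
  apply: dr_sum => a; apply: dr_sum => b; apply: dr_sum => e; apply: dr_mul.
    apply: dr_mul; last exact: dr_crd.
    apply: dr_scal; exact: dr_crd.
  exact: dr_crd.
rewrite /B3 -!big_split; apply: eq_bigr => a _ /=.
rewrite -!big_split; apply: eq_bigr => b _ /=.
rewrite -!big_split; apply: eq_bigr => e _ /=.
rewrite !evecE; ring.
Qed.

Lemma dB4 c x j : is_derive x (evec R j) (fun y => B4 c y y y y)
  (B4 c (evec R j) x x x + B4 c x (evec R j) x x + B4 c x x (evec R j) x
   + B4 c x x x (evec R j)).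
Proof.
apply: dr_eq.
  apply: dr_sum => a; apply: dr_sum => b; apply: dr_sum => e; apply: dr_sum => f.
  apply: dr_mul; last exact: dr_crd.
  apply: dr_mul; last exact: dr_crd.
  apply: dr_mul; last exact: dr_crd.
  apply: dr_scal; exact: dr_crd.
rewrite /B4 -!big_split; apply: eq_bigr => a _ /=.
rewrite -!big_split; apply: eq_bigr => b _ /=.
rewrite -!big_split; apply: eq_bigr => e _ /=.
rewrite -!big_split; apply: eq_bigr => f _ /=.
rewrite !evecE; ring.
Qed.


Lemma B2_e1 c j v : B2 c (evec R j) v = B1 (c j) v.
Proof.
rewrite /B2 /B1 (bigD1 j) //= [X in _ + X]big1 ?addr0.
  by apply: eq_bigr => b _; rewrite evecE eqxx mulr1.
move=> a /negbTE aj.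
by apply: big1 => b _; rewrite evecE aj mulr0 mul0r.
Qed.

Lemma B3_e1 c j v w : B3 c (evec R j) v w = B2 (c j) v w.
Proof.
rewrite /B3 /B2 (bigD1 j) //= [X in _ + X]big1 ?addr0; last first.
  move=> a /negbTE aj.
  by apply: big1 => b _; apply: big1 => e _; rewrite evecE aj mulr0 !mul0r.
  by apply: eq_bigr => b _; apply: eq_bigr => e _; rewrite evecE eqxx mulr1.
Qed.

Lemma B4_e1 c j v w z : B4 c (evec R j) v w z = B3 (c j) v w z.
Proof.
rewrite /B4 /B3 (bigD1 j) //= [X in _ + X]big1 ?addr0; last first.
  move=> a /negbTE aj.
  by apply: big1 => b _; apply: big1 => e _; apply: big1 => f _;
  rewrite evecE aj mulr0 !mul0r.
  by apply: eq_bigr => b _; apply: eq_bigr => e _; apply: eq_bigr => f _;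
    rewrite evecE eqxx mulr1.
Qed.

Lemma B2_sym c u v : sym2 c -> B2 c u v = B2 c v u.
Proof.
move=> s; rewrite /B2 exchange_big; apply: eq_bigr => a _; apply: eq_bigr => b _.
rewrite s; ring.
Qed.

Lemma B3_sym12 c u v w : sym3 c -> B3 c u v w = B3 c v u w.
Proof.
move=> s; rewrite /B3 exchange_big; apply: eq_bigr => a _; apply: eq_bigr => b _.
apply: eq_bigr => e _; rewrite (s b a e).1; ring.
Qed.

Lemma B3_sym23 c u v w : sym3 c -> B3 c u v w = B3 c u w v.
Proof.
move=> s; rewrite /B3; apply: eq_bigr => a _; rewrite exchange_big.
apply: eq_bigr => b _; apply: eq_bigr => e _; rewrite (s a e b).2; ring.
Qed.

Lemma B4_sym12 c u v w z : sym4 c -> B4 c u v w z = B4 c v u w z.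
Proof.
move=> s; rewrite /B4 exchange_big; apply: eq_bigr => a _; apply: eq_bigr => b _.
apply: eq_bigr => e _; apply: eq_bigr => f _; have [-> _ _] := s b a e f; ring.
Qed.

Lemma B4_sym23 c u v w z : sym4 c -> B4 c u v w z = B4 c u w v z.
Proof.
move=> s; rewrite /B4; apply: eq_bigr => a _; rewrite exchange_big.
apply: eq_bigr => b _; apply: eq_bigr => e _; apply: eq_bigr => f _.
have [_ -> _] := s a e b f; ring.
Qed.

Lemma B4_sym34 c u v w z : sym4 c -> B4 c u v w z = B4 c u v z w.
Proof.
move=> s; rewrite /B4; apply: eq_bigr => a _; apply: eq_bigr => b _;
  rewrite exchange_big.
apply: eq_bigr => e _; apply: eq_bigr => f _.
have [_ _ ->] := s a b f e; ring.
Qed.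

Lemma dB2s c x j : sym2 c ->
  is_derive x (evec R j) (fun y => B2 c y y) (2 * B1 (c j) x).
Proof.
move=> s; apply: dr_eq; first exact: dB2.
by rewrite [B2 c x _]B2_sym // B2_e1 mulr2n mulrDl mul1r.
Qed.

Lemma dB3s c x j : sym3 c ->
  is_derive x (evec R j) (fun y => B3 c y y y) (3 * B2 (c j) x x).
Proof.
move=> s; apply: dr_eq; first exact: dB3.
rewrite [B3 c x x _]B3_sym23 // [B3 c x _ x]B3_sym12 // B3_e1.
ring.
Qed.

Lemma dB4s c x j : sym4 c ->
  is_derive x (evec R j) (fun y => B4 c y y y y) (4 * B3 (c j) x x x).
Proof.
move=> s.
apply: dr_eq; first exact: dB4.
rewrite [B4 c x x x _]B4_sym34 // [B4 c x x _ x]B4_sym23 //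
  [B4 c x _ x x]B4_sym12 // B4_e1.
ring.
Qed.


Lemma B1_0 c : B1 c 0 = 0.
Proof. by rewrite /B1 big1 // => a _; rewrite mxE mulr0. Qed.
Lemma B2_0 c : B2 c 0 0 = 0.
Proof. by rewrite /B2 big1 // => a _; rewrite big1 // => b _; rewrite !mxE !mulr0. Qed.
Lemma B3_0 c : B3 c 0 0 0 = 0.
Proof.
rewrite /B3 big1 // => a _; rewrite big1 // => b _; rewrite big1 // => e _.
by rewrite !mxE !mulr0.
Qed.
Lemma B4_0 c : B4 c 0 0 0 0 = 0.
Proof.
rewrite /B4 big1 // => a _; rewrite big1 // => b _; rewrite big1 // => e _.
by rewrite big1 // => f _; rewrite !mxE !mulr0.
Qed.

End Forms.

Section Sorted.
Context {R : realType} {N : nat}.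
Local Notation rv := ('rV[R]_N).
Local Notation I := ('I_N).
Variable V : rv -> R.

Definition ole : rel I := fun i j => (val i <= val j)%N.
Lemma ole_total : total ole. Proof. by move=> i j; exact: leq_total. Qed.
Lemma ole_trans : transitive ole. Proof. by move=> i j k; exact: leq_trans. Qed.
Lemma ole_anti : antisymmetric ole.
Proof. by move=> i j H; apply/val_inj/anti_leq. Qed.

Definition G3 (s : seq I) :=
  if s is [:: i; j; k] then partial i (partial j (partial k V)) 0 else 0.
Definition G4 (s : seq I) :=
  if s is [:: h; i; j; k] then partial h (partial i (partial j (partial k V))) 0 else 0.
Definition D3 a b c := G3 (sort ole [:: a; b; c]).
Definition D4 a b c d := G4 (sort ole [:: a; b; c; d]).

Lemma sort_perm s1 s2 : perm_eq s1 s2 -> sort ole s1 = sort ole s2.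
Proof. by move/(perm_sortP ole_total ole_trans ole_anti). Qed.

Lemma D3_sym : sym3 D3.
Proof.
move=> a b c; split; rewrite /D3; congr G3; apply: sort_perm;
  apply/permP => p /=; rewrite !addn0.
  by rewrite addnCA.
by rewrite [(p b + p c)%N]addnC.
Qed.

Lemma D4_sym : sym4 D4.
Proof.
move=> a b c d; split; rewrite /D4; congr G4; apply: sort_perm;
  apply/permP => p /=; rewrite !addn0.
- by rewrite addnCA.
- by rewrite [(p b + (p c + p d))%N]addnCA.
- by rewrite [(p c + p d)%N]addnC.
Qed.

Lemma D3_sorted i j k : (val i <= val j <= val k)%N ->
  D3 i j k = partial i (partial j (partial k V)) 0.
Proof.
move=> /andP[ij jk]; rewrite /D3 sorted_sort //; first exact: ole_trans.
by rewrite /= /ole ij jk.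
Qed.

Lemma D4_sorted h i j k : (val h <= val i <= val j)%N -> (val j <= val k)%N ->
  D4 h i j k = partial h (partial i (partial j (partial k V))) 0.
Proof.
move=> /andP[hi ij] jk; rewrite /D4 sorted_sort //; first exact: ole_trans.
by rewrite /= /ole hi ij jk.
Qed.


Lemma D3_rev a b c : D3 a b c = D3 c b a.
Proof.
rewrite /D3; congr G3; apply: sort_perm; apply/permP => p /=; rewrite !addn0.
lia.
Qed.

Lemma D4_rev a b c d : D4 a b c d = D4 d c b a.
Proof.
rewrite /D4; congr G4; apply: sort_perm; apply/permP => p /=; rewrite !addn0.
lia.
Qed.

End Sorted.

Section Taylor.
Context {R : realType} {N : nat}.
Local Notation rv := ('rV[R]_N).
Local Notation I := ('I_N).
Variables (V : rv -> R) (lam : I -> R).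
Hypothesis HC : Ck 4 V.
Hypothesis Hd1 : forall i : I, partial i V 0 = 0.
Hypothesis Hd2 : forall i j : I, partial i (partial j V) 0 = if i == j then lam i else 0.

Definition D2 (a b : I) := if a == b then lam a else 0.
Lemma D2_sym : sym2 D2.
Proof. by move=> a b; rewrite /D2 eq_sym; case: eqP => // ->. Qed.

Definition T0 x := 2^-1 * B2 D2 x x + 6^-1 * B3 (D3 V) x x x + 24^-1 * B4 (D4 V) x x x x.
Definition T1 k x := B1 (D2 k) x + 2^-1 * B2 (D3 V k) x x + 6^-1 * B3 (D4 V k) x x x.
Definition T2 j k x := D2 k j + B1 (D3 V k j) x + 2^-1 * B2 (D4 V k j) x x.
Definition T3 i j k x := D3 V k j i + B1 (D4 V k j i) x.

Lemma symD3k k : sym2 (D3 V k).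
Proof. by move=> a b; rewrite (D3_sym V k a b).2. Qed.
Lemma symD4k k : sym3 (D4 V k).
Proof. move=> a b e; have [_ H1 H2] := D4_sym V k a b e; by split. Qed.
Lemma symD4kj k j : sym2 (D4 V k j).
Proof. move=> a b; by have [_ _ ->] := D4_sym V k j a b. Qed.

Lemma dT0 x k : is_derive x (evec R k) T0 (T1 k x).
Proof.
apply: dr_eq.
  apply: dr_add; first apply: dr_add.
  - apply: dr_scal; apply: dB2s; exact: D2_sym.
  - apply: dr_scal; apply: dB3s; exact: D3_sym.
  - apply: dr_scal; apply: dB4s; exact: D4_sym.
by rewrite /T1; field.
Qed.

Lemma dT1 x j k : is_derive x (evec R j) (T1 k) (T2 j k x).
Proof.
apply: dr_eq.
  apply: dr_add; first apply: dr_add.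
  - exact: dB1.
  - apply: dr_scal; apply: dB2s; exact: symD3k.
  - apply: dr_scal; apply: dB3s; exact: symD4k.
by rewrite /T2; field.
Qed.

Lemma dT2 x i j k : is_derive x (evec R i) (T2 j k) (T3 i j k x).
Proof.
apply: dr_eq.
  apply: dr_add; first apply: dr_add.
  - exact: dB1.
  - apply: dr_scal; apply: dB2s; exact: symD4kj.
by rewrite /T3; field.
Qed.

Lemma dT3 x h i j k : is_derive x (evec R h) (T3 i j k) (D4 V k j i h).
Proof.
apply: dr_eq.
  apply: dr_add; try exact: dB1.
by rewrite add0r.
Qed.


Lemma dV1 k x : derivable V x (evec R k).
Proof. by have [_ H] := HC; case: (H k). Qed.
Lemma dV2 j k x : derivable (partial k V) x (evec R j).
Proof. have [_ H] := HC; have [_ [_ H2]] := H k; by case: (H2 j). Qed.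
Lemma dV3 i j k x : derivable (partial j (partial k V)) x (evec R i).
Proof.
have [_ H] := HC; have [_ [_ H2]] := H k; have [_ [_ H3]] := H2 j; by case: (H3 i).
Qed.
Lemma dV4 h i j k x : derivable (partial i (partial j (partial k V))) x (evec R h).
Proof.
have [_ H] := HC; have [_ [_ H2]] := H k; have [_ [_ H3]] := H2 j.
have [_ [_ H4]] := H3 i; by case: (H4 h).
Qed.
Lemma cV4 h i j k : continuous (partial h (partial i (partial j (partial k V)))).
Proof.
have [_ H] := HC; have [_ [_ H2]] := H k; have [_ [_ H3]] := H2 j.
have [_ [_ H4]] := H3 i; have [_ H5] := H4 h; exact: H5.
Qed.

Definition E0 x := V x - T0 x.
Definition E1 k x := partial k V x - T1 k x.
Definition E2 j k x := partial j (partial k V) x - T2 j k x.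
Definition E3 i j k x := partial i (partial j (partial k V)) x - T3 i j k x.
Definition E4 h i j k x := partial h (partial i (partial j (partial k V))) x - D4 V k j i h.

Lemma iE0 x k : is_derive x (evec R k) E0 (E1 k x).
Proof. exact: (dr_sub _ _ _ _ _ _ (derivableP (dV1 k x)) (dT0 x k)) . Qed.
Lemma iE1 x j k : is_derive x (evec R j) (E1 k) (E2 j k x).
Proof. exact: (dr_sub _ _ _ _ _ _ (derivableP (dV2 j k x)) (dT1 x j k)) . Qed.
Lemma iE2 x i j k : is_derive x (evec R i) (E2 j k) (E3 i j k x).
Proof. exact: (dr_sub _ _ _ _ _ _ (derivableP (dV3 i j k x)) (dT2 x i j k)) . Qed.
Lemma iE3 x h i j k : is_derive x (evec R h) (E3 i j k) (E4 h i j k x).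
Proof. exact: (dr_sub _ _ _ _ _ _ (derivableP (dV4 h i j k x)) (dT3 x h i j k)) . Qed.


Lemma s4 h i j k : (val h <= val i <= val j)%N -> (val j <= val k)%N ->
  small (E4 h i j k) h.+1 0.
Proof.
move=> hij jk e e0.
move: (cV4 h i j k 0) => /cvgr_dist_le /(_ e e0).
move/nbhs_norm0P => [d d0 Hd].
exists d => // z _ zd; rewrite expr0 mulr1.
have := Hd z zd; rewrite /E4 D4_rev -D4_sorted // distrC //.
Qed.

Lemma E3_0 i j k : (val i <= val j <= val k)%N -> E3 i j k 0 = 0.
Proof. by move=> H; rewrite /E3 /T3 B1_0 addr0 D3_rev D3_sorted // subrr. Qed.

Lemma E2_0 j k : E2 j k 0 = 0.
Proof.
rewrite /E2 /T2 B1_0 B2_0 mulr0 !addr0 Hd2 /D2 eq_sym.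
by case: eqP => [->|]; rewrite subrr.
Qed.

Lemma E1_0 k : E1 k 0 = 0.
Proof. by rewrite /E1 /T1 B1_0 B2_0 B3_0 !mulr0 !addr0 Hd1 subrr. Qed.

Hypothesis HV0 : V 0 = 0.
Lemma E0_0 : E0 0 = 0.
Proof. by rewrite /E0 /T0 B2_0 B3_0 B4_0 !mulr0 !addr0 HV0 subrr. Qed.

Lemma s3 i j k : (val i <= val j <= val k)%N -> small (E3 i j k) i.+1 1.
Proof.
move=> /andP[ij jk].
apply: lemA => //.
- by move=> h _ z; case: (iE3 z h i j k).
- by apply: E3_0; rewrite ij jk.
move=> h hi.
have -> : partial h (E3 i j k) = E4 h i j k.
  by apply/funext => z; apply: partialE; exact: iE3.
by apply: s4 => //; rewrite -ltnS hi ij.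
Qed.

Lemma s2 j k : (val j <= val k)%N -> small (E2 j k) j.+1 2.
Proof.
move=> jk.
apply: lemA => //.
- by move=> h _ z; case: (iE2 z h j k).
- exact: E2_0.
move=> i ij.
have -> : partial i (E2 j k) = E3 i j k.
  by apply/funext => z; apply: partialE; exact: iE2.
by apply: s3; rewrite -ltnS ij jk.
Qed.

Lemma s1 k : small (E1 k) k.+1 3.
Proof.
apply: lemA => //.
- by move=> h _ z; case: (iE1 z h k).
- exact: E1_0.
move=> j jk.
have -> : partial j (E1 k) = E2 j k.
  by apply/funext => z; apply: partialE; exact: iE1.
by apply: s2; rewrite -ltnS jk.
Qed.

Lemma s0 : small E0 N 4.
Proof.
apply: lemA => //.
- by move=> h _ z; case: (iE0 z h).
- exact: E0_0.
move=> k _.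
have -> : partial k E0 = E1 k.
  by apply/funext => z; apply: partialE; exact: iE0.
exact: s1.
Qed.

Lemma taylor4 e : 0 < e -> exists2 d : R, 0 < d &
  forall z : rv, `|z| < d -> `|V z - T0 z| <= e * `|z| ^+ 4.
Proof.
move=> e0; have [d d0 H] := s0 e e0; exists d => // z zd.
by apply: H => // i iN; move: (ltn_ord i); rewrite ltnNge iN.
Qed.

End Taylor.

Section Forms2.
Context {R : realType} {N : nat}.
Local Notation rv := ('rV[R]_N).
Local Notation I := ('I_N).
Implicit Types (x u v w z : rv).

Lemma B1_first (c : I -> R) u : B1 c u = \sum_a u 0 a * c a.
Proof. by apply: eq_bigr => a _; rewrite mulrC. Qed.
Lemma B2_first c u v : B2 c u v = \sum_a u 0 a * B1 (c a) v.
Proof. apply: eq_bigr => a _; rewrite /B1 mulr_sumr; apply: eq_bigr => b _; ring. Qed.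
Lemma B3_first c u v w : B3 c u v w = \sum_a u 0 a * B2 (c a) v w.
Proof.
apply: eq_bigr => a _; rewrite /B2 mulr_sumr; apply: eq_bigr => b _.
rewrite mulr_sumr; apply: eq_bigr => e _; ring.
Qed.
Lemma B4_first c u v w z : B4 c u v w z = \sum_a u 0 a * B3 (c a) v w z.
Proof.
apply: eq_bigr => a _; rewrite /B3 mulr_sumr; apply: eq_bigr => b _.
rewrite mulr_sumr; apply: eq_bigr => e _.
rewrite mulr_sumr; apply: eq_bigr => f _; ring.
Qed.

Lemma B2_cD c d u v : B2 (fun a b => c a b + d a b) u v = B2 c u v + B2 d u v.
Proof.
rewrite /B2 -big_split; apply: eq_bigr => a _; rewrite -big_split.
by apply: eq_bigr => b _ /=; ring.
Qed.
Lemma B3_cD c d u v w :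
  B3 (fun a b e => c a b e + d a b e) u v w = B3 c u v w + B3 d u v w.
Proof.
rewrite /B3 -big_split; apply: eq_bigr => a _; rewrite -big_split.
apply: eq_bigr => b _ /=; rewrite -big_split; apply: eq_bigr => e _ /=; ring.
Qed.
Lemma B4_cD c d u v w z :
  B4 (fun a b e f => c a b e f + d a b e f) u v w z = B4 c u v w z + B4 d u v w z.
Proof.
rewrite /B4 -big_split; apply: eq_bigr => a _; rewrite -big_split.
apply: eq_bigr => b _ /=; rewrite -big_split; apply: eq_bigr => e _ /=.
rewrite -big_split; apply: eq_bigr => f _ /=; ring.
Qed.

Lemma B2_cZ s c u v : B2 (fun a b => s * c a b) u v = s * B2 c u v.
Proof.
rewrite /B2 mulr_sumr; apply: eq_bigr => a _; rewrite mulr_sumr.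
by apply: eq_bigr => b _; ring.
Qed.
Lemma B3_cZ s c u v w : B3 (fun a b e => s * c a b e) u v w = s * B3 c u v w.
Proof.
rewrite /B3 mulr_sumr; apply: eq_bigr => a _; rewrite mulr_sumr.
apply: eq_bigr => b _; rewrite mulr_sumr; apply: eq_bigr => e _; ring.
Qed.
Lemma B4_cZ s c u v w z : B4 (fun a b e f => s * c a b e f) u v w z = s * B4 c u v w z.
Proof.
rewrite /B4 mulr_sumr; apply: eq_bigr => a _; rewrite mulr_sumr.
apply: eq_bigr => b _; rewrite mulr_sumr; apply: eq_bigr => e _.
rewrite mulr_sumr; apply: eq_bigr => f _; ring.
Qed.

Lemma B1_dl j k u : B1 (fun a => (a == j)%:R * k) u = u 0 j * k.
Proof.
rewrite B1_first -[RHS](sum_delta (fun a => u 0 a * k) j).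
by apply: eq_bigr => a _; ring.
Qed.
Lemma B2_dl j d u v : B2 (fun a b => (a == j)%:R * d b) u v = u 0 j * B1 d v.
Proof.
rewrite B2_first -[RHS](sum_delta (fun a => u 0 a * B1 d v) j).
apply: eq_bigr => a _; rewrite /B1 mulr_sumr mulr_sumr mulr_sumr.
by apply: eq_bigr => b _; ring.
Qed.
Lemma B3_dl j d u v w :
  B3 (fun a b e => (a == j)%:R * d b e) u v w = u 0 j * B2 d v w.
Proof.
rewrite B3_first -[RHS](sum_delta (fun a => u 0 a * B2 d v w) j).
apply: eq_bigr => a _; rewrite B2_cZ; ring.
Qed.

Lemma B4_sumc (K : I -> I -> I -> I -> I -> R) u v w z :
  B4 (fun a b e f => \sum_i K i a b e f) u v w z = \sum_i B4 (K i) u v w z.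
Proof.
rewrite /B4 [RHS]exchange_big; apply: eq_bigr => a _ /=.
rewrite [RHS]exchange_big; apply: eq_bigr => b _ /=.
rewrite [RHS]exchange_big; apply: eq_bigr => e _ /=.
rewrite [RHS]exchange_big; apply: eq_bigr => f _ /=.
by rewrite !mulr_suml.
Qed.

Lemma B2_prod p q u : B2 p u u * B2 q u u = B4 (fun a b e f => p a b * q e f) u u u u.
Proof.
rewrite /B2 /B4 mulr_suml; apply: eq_bigr => a _.
rewrite mulr_suml; apply: eq_bigr => b _.
rewrite mulr_sumr; apply: eq_bigr => e _.
rewrite mulr_sumr; apply: eq_bigr => f _; ring.
Qed.

Lemma B3_D1 c u u' v w : B3 c (u + u') v w = B3 c u v w + B3 c u' v w.
Proof.
rewrite /B3 -big_split; apply: eq_bigr => a _; rewrite -big_split.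
apply: eq_bigr => b _; rewrite -big_split; apply: eq_bigr => e _ /=.
rewrite mxE; ring.
Qed.
Lemma B3_D2 c u v v' w : B3 c u (v + v') w = B3 c u v w + B3 c u v' w.
Proof.
rewrite /B3 -big_split; apply: eq_bigr => a _; rewrite -big_split.
apply: eq_bigr => b _; rewrite -big_split; apply: eq_bigr => e _ /=.
rewrite mxE; ring.
Qed.
Lemma B3_D3 c u v w w' : B3 c u v (w + w') = B3 c u v w + B3 c u v w'.
Proof.
rewrite /B3 -big_split; apply: eq_bigr => a _; rewrite -big_split.
apply: eq_bigr => b _; rewrite -big_split; apply: eq_bigr => e _ /=.
rewrite mxE; ring.
Qed.
Lemma B4_D1 c u u' v w z : B4 c (u + u') v w z = B4 c u v w z + B4 c u' v w z.
Proof.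
rewrite /B4 -big_split; apply: eq_bigr => a _; rewrite -big_split.
apply: eq_bigr => b _; rewrite -big_split; apply: eq_bigr => e _ /=.
rewrite -big_split; apply: eq_bigr => f _ /=; rewrite mxE; ring.
Qed.
Lemma B4_D2 c u v v' w z : B4 c u (v + v') w z = B4 c u v w z + B4 c u v' w z.
Proof.
rewrite /B4 -big_split; apply: eq_bigr => a _; rewrite -big_split.
apply: eq_bigr => b _; rewrite -big_split; apply: eq_bigr => e _ /=.
rewrite -big_split; apply: eq_bigr => f _ /=; rewrite mxE; ring.
Qed.
Lemma B4_D3 c u v w w' z : B4 c u v (w + w') z = B4 c u v w z + B4 c u v w' z.
Proof.
rewrite /B4 -big_split; apply: eq_bigr => a _; rewrite -big_split.
apply: eq_bigr => b _; rewrite -big_split; apply: eq_bigr => e _ /=.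
rewrite -big_split; apply: eq_bigr => f _ /=; rewrite mxE; ring.
Qed.
Lemma B4_D4 c u v w z z' : B4 c u v w (z + z') = B4 c u v w z + B4 c u v w z'.
Proof.
rewrite /B4 -big_split; apply: eq_bigr => a _; rewrite -big_split.
apply: eq_bigr => b _; rewrite -big_split; apply: eq_bigr => e _ /=.
rewrite -big_split; apply: eq_bigr => f _ /=; rewrite mxE; ring.
Qed.

Definition S1 (c : I -> R) := \sum_a `|c a|.
Definition S2 (c : I -> I -> R) := \sum_a \sum_b `|c a b|.
Definition S3 (c : I -> I -> I -> R) := \sum_a \sum_b \sum_e `|c a b e|.
Definition S4 (c : I -> I -> I -> I -> R) := \sum_a \sum_b \sum_e \sum_f `|c a b e f|.

Lemma S2_ge0 c : 0 <= S2 c.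
Proof. by apply: sumr_ge0 => a _; apply: sumr_ge0. Qed.
Lemma S3_ge0 c : 0 <= S3 c.
Proof. by apply: sumr_ge0 => a _; apply: sumr_ge0 => b _; apply: sumr_ge0. Qed.
Lemma S4_ge0 c : 0 <= S4 c.
Proof.
by apply: sumr_ge0 => a _; apply: sumr_ge0 => b _; apply: sumr_ge0 => e _;
  apply: sumr_ge0.
Qed.

Lemma B2_bound c u v : `|B2 c u v| <= S2 c * (`|u| * `|v|).
Proof.
rewrite /S2 mulr_suml; apply: le_trans (ler_norm_sum _ _ _) _.
apply: ler_sum => a _; rewrite mulr_suml; apply: le_trans (ler_norm_sum _ _ _) _.
apply: ler_sum => b _; rewrite !normrM -mulrA.
apply: ler_wpM2l => //; apply: ler_pM => //; exact: coord_le.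
Qed.
Lemma B3_bound c u v w : `|B3 c u v w| <= S3 c * (`|u| * `|v| * `|w|).
Proof.
rewrite /S3 mulr_suml; apply: le_trans (ler_norm_sum _ _ _) _.
apply: ler_sum => a _; rewrite mulr_suml; apply: le_trans (ler_norm_sum _ _ _) _.
apply: ler_sum => b _; rewrite mulr_suml; apply: le_trans (ler_norm_sum _ _ _) _.
apply: ler_sum => e _; rewrite !normrM -!mulrA.
apply: ler_wpM2l => //; rewrite !mulrA.
repeat (apply: ler_pM; rewrite ?mulr_ge0 //).
all: exact: coord_le.
Qed.
Lemma B4_bound c u v w z : `|B4 c u v w z| <= S4 c * (`|u| * `|v| * `|w| * `|z|).
Proof.
rewrite /S4 mulr_suml; apply: le_trans (ler_norm_sum _ _ _) _.
apply: ler_sum => a _; rewrite mulr_suml; apply: le_trans (ler_norm_sum _ _ _) _.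
apply: ler_sum => b _; rewrite mulr_suml; apply: le_trans (ler_norm_sum _ _ _) _.
apply: ler_sum => e _; rewrite mulr_suml; apply: le_trans (ler_norm_sum _ _ _) _.
apply: ler_sum => f _; rewrite !normrM -!mulrA.
apply: ler_wpM2l => //; rewrite !mulrA.
repeat (apply: ler_pM; rewrite ?mulr_ge0 //).
all: exact: coord_le.
Qed.

End Forms2.

Section Dec.
Context {R : realType} {N : nat}.
Local Notation rv := ('rV[R]_N).
Local Notation I := ('I_N).
Implicit Types (x u v w z y : rv).
Variable o : I.

Definition R3 (c : I -> I -> I -> R) j a b :=
  c j a b + (a == o)%:R * c o j b + (a == o)%:R * ((b == o)%:R * c o o j).
Definition R4 (c : I -> I -> I -> I -> R) j a b e :=
  c j a b e + (a == o)%:R * c o j b e + (a == o)%:R * ((b == o)%:R * c o o j e)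
  + (a == o)%:R * ((b == o)%:R * ((e == o)%:R * c o o o j)).

Lemma B2_R3 c j y : B2 (R3 c j) y y =
  B2 (c j) y y + y 0 o * B1 (c o j) y + y 0 o * (y 0 o * c o o j).
Proof.
rewrite /R3.
rewrite (B2_cD (fun a b => c j a b + (a == o)%:R * c o j b)).
rewrite (B2_cD (fun a b => c j a b)).
rewrite (B2_dl o (fun b => c o j b)).
rewrite (B2_dl o (fun b => (b == o)%:R * c o o j)).
by rewrite B1_dl.
Qed.

Lemma B3_R4 c j y : B3 (R4 c j) y y y =
  B3 (c j) y y y + y 0 o * B2 (c o j) y y + y 0 o * (y 0 o * B1 (c o o j) y)
  + y 0 o * (y 0 o * (y 0 o * c o o o j)).
Proof.
rewrite /R4.
rewrite (B3_cD (fun a b e => c j a b e + (a == o)%:R * c o j b e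
     + (a == o)%:R * ((b == o)%:R * c o o j e))).
rewrite (B3_cD (fun a b e => c j a b e + (a == o)%:R * c o j b e)).
rewrite (B3_cD (fun a b e => c j a b e)).
rewrite (B3_dl o (fun b e => c o j b e)).
rewrite (B3_dl o (fun b e => (b == o)%:R * c o o j e)).
rewrite (B3_dl o (fun b e => (b == o)%:R * ((e == o)%:R * c o o o j))).
rewrite (B2_dl o (fun e => c o o j e)).
rewrite (B2_dl o (fun e => (e == o)%:R * c o o o j)).
by rewrite B1_dl.
Qed.

Lemma dec3 c y : B3 c y y y =
  c o o o * y 0 o ^+ 3 + \sum_(j | j != o) y 0 j * B2 (R3 c j) y y.
Proof.
rewrite B3_first (bigD1 o) //= B2_first (bigD1 o) //= B1_first (bigD1 o) //=.
have -> : \sum_(j | j != o) y 0 j * B2 (R3 c j) y y =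
   \sum_(j | j != o) y 0 j * B2 (c j) y y
   + y 0 o * \sum_(j | j != o) y 0 j * B1 (c o j) y
   + y 0 o ^+ 2 * \sum_(j | j != o) y 0 j * c o o j.
  rewrite !mulr_sumr -!big_split /=; apply: eq_bigr => j _; rewrite B2_R3; ring.
ring.
Qed.

Lemma dec4 c y : B4 c y y y y =
  c o o o o * y 0 o ^+ 4 + \sum_(j | j != o) y 0 j * B3 (R4 c j) y y y.
Proof.
rewrite B4_first (bigD1 o) //= B3_first (bigD1 o) //= B2_first (bigD1 o) //=.
rewrite B1_first (bigD1 o) //=.
have -> : \sum_(j | j != o) y 0 j * B3 (R4 c j) y y y =
   \sum_(j | j != o) y 0 j * B3 (c j) y y y
   + y 0 o * \sum_(j | j != o) y 0 j * B2 (c o j) y y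
   + y 0 o ^+ 2 * \sum_(j | j != o) y 0 j * B1 (c o o j) y
   + y 0 o ^+ 3 * \sum_(j | j != o) y 0 j * c o o o j.
  rewrite !mulr_sumr -!big_split /=; apply: eq_bigr => j _; rewrite B3_R4; ring.
ring.
Qed.

End Dec.

Section Main.
Context {R : realType} {n : nat}.
Local Notation N := n.+2.
Local Notation rv := ('rV[R]_N).
Local Notation I := ('I_N).
Local Notation o := (@ord0 n.+1).
Variables (V : rv -> R) (lam : I -> R).
Hypothesis Hl0 : lam o = 0.
Hypothesis Hl1 : lam (inord 1) != 0.
Hypothesis Hl2 : forall i : I, (2 <= i)%N -> 0 < lam i.

Lemma lam_nz i : i != o -> lam i != 0.
Proof.
move=> i0; case: (ltnP 1 i) => [i2 | i1]; first by rewrite gt_eqF ?Hl2.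
have hi : (nat_of_ord i != 0)%N by move: i0; rewrite -(inj_eq val_inj).
have iv : nat_of_ord i = 1%N by move: i1 hi; case: (nat_of_ord i) => [|[|m]].
by have -> : i = inord 1 by apply: ord_inj; rewrite inordK.
Qed.

Definition c3 a b e := 6^-1 * D3 V a b e.
Definition A (i j k : I) := if i == o then 0 else - (lam i)^-1 * R3 o c3 i j k.
Definition K a b e f := \sum_i (2^-1 * A i a b) * D3 V i e f
  + \sum_i (2^-1 * lam i * A i a b) * A i e f + 24^-1 * D4 V a b e f.
Definition Bc (i j k l : I) := if i == o then 0 else - (lam i)^-1 * R4 o K i j k l.
Definition G2 i (y : rv) := B2 (A i) y y.
Definition Gc3 i (y : rv) := B3 (Bc i) y y y.
Definition G2v (y : rv) : rv := \row_i G2 i y.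
Definition G3v (y : rv) : rv := \row_i Gc3 i y.

Lemma A_nz i : i != o -> A i = fun j k => - (lam i)^-1 * R3 o c3 i j k.
Proof. by move=> i0; apply/funext => j; apply/funext => k; rewrite /A (negbTE i0). Qed.
Lemma Bc_nz i : i != o -> Bc i = fun j k l => - (lam i)^-1 * R4 o K i j k l.
Proof.
by move=> i0; apply/funext => j; apply/funext => k; apply/funext => l;
  rewrite /Bc (negbTE i0).
Qed.

Lemma cubic y : B3 c3 y y y + \sum_a lam a * y 0 a * G2 a y =
  c3 o o o * y 0 o ^+ 3.
Proof.
rewrite (dec3 o) [X in _ + X = _](bigD1 o) //= Hl0 !mul0r add0r.
have -> : \sum_(a | a != o) lam a * y 0 a * G2 a y =
   - \sum_(j | j != o) y 0 j * B2 (R3 o c3 j) y y.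
  rewrite -sumrN; apply: eq_bigr => a a0; rewrite /G2 (@A_nz a a0) B2_cZ.
  by field; rewrite lam_nz.
by rewrite addrK.
Qed.

Lemma quartic y : B4 K y y y y + \sum_a lam a * y 0 a * Gc3 a y =
  K o o o o * y 0 o ^+ 4.
Proof.
rewrite (dec4 o) [X in _ + X = _](bigD1 o) //= Hl0 !mul0r add0r.
have -> : \sum_(a | a != o) lam a * y 0 a * Gc3 a y =
   - \sum_(j | j != o) y 0 j * B3 (R4 o K j) y y y.
  rewrite -sumrN; apply: eq_bigr => a a0; rewrite /Gc3 (@Bc_nz a a0) B3_cZ.
  by field; rewrite lam_nz.
by rewrite addrK.
Qed.

Definition F y := 2^-1 * B3 (D3 V) (G2v y) y y + 2^-1 * \sum_a lam a * G2 a y ^+ 2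
  + 24^-1 * B4 (D4 V) y y y y.

Lemma F_K y : F y = B4 K y y y y.
Proof.
rewrite /K (B4_cD (fun a b e f => \sum_i (2^-1 * A i a b) * D3 V i e f
  + \sum_i (2^-1 * lam i * A i a b) * A i e f)).
rewrite (B4_cD (fun a b e f => \sum_i (2^-1 * A i a b) * D3 V i e f)).
rewrite !B4_sumc B4_cZ /F B3_first.
congr (_ + _ + _).
- rewrite mulr_sumr; apply: eq_bigr => i _; rewrite mxE /G2 B2_prod -B4_cZ.
  congr B4; apply/funext => a; apply/funext => b; apply/funext => e;
  apply/funext => f /=; ring.
- rewrite mulr_sumr; apply: eq_bigr => i _; rewrite /G2 expr2 B2_prod -!B4_cZ.
  congr B4; apply/funext => a; apply/funext => b; apply/funext => e;
  apply/funext => f /=; ring.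
Qed.

Lemma K0 : K o o o o = 24^-1 * D4 V o o o o
  - 2^-1 * \sum_(j | j != o) (2^-1 * D3 V o o j) ^+ 2 / lam j.
Proof.
rewrite /K (bigD1 o) //= [X in _ + X + _](bigD1 o) //= /A eqxx !mulr0 !mul0r !add0r.
rewrite addrC; congr (_ + _).
rewrite -big_split /= mulr_sumr -sumrN; apply: eq_bigr => j j0.
rewrite (negbTE j0) /R3 eqxx !mul1r /c3.
rewrite (D3_rev V j o o) (D3_sym V o j o).2.
by field; rewrite lam_nz.
Qed.


Lemma B1_D2 a (v : rv) : B1 (D2 lam a) v = lam a * v 0 a.
Proof.
rewrite /B1 (bigD1 a) //= /D2 eqxx big1 ?addr0 // => b ba.
by rewrite eq_sym (negbTE ba) mul0r.
Qed.

Lemma B2_D2 (v : rv) : B2 (D2 lam) v v = \sum_a lam a * v 0 a ^+ 2.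
Proof. rewrite B2_first; apply: eq_bigr => a _; rewrite B1_D2; ring. Qed.

Lemma B3_cube c (y u : rv) : sym3 c -> B3 c (y + u) (y + u) (y + u) =
  B3 c y y y + 3 * B3 c u y y + 3 * B3 c u u y + B3 c u u u.
Proof.
move=> S; rewrite !(B3_D1, B3_D2, B3_D3).
rewrite [B3 _ y u y](B3_sym12 _ _ _ _ S) [B3 _ y y u](B3_sym23 _ _ _ _ S).
rewrite [B3 _ y u y](B3_sym12 _ _ _ _ S) [B3 _ u y u](B3_sym23 _ _ _ _ S).
rewrite [B3 _ y u u](B3_sym12 _ _ _ _ S) [B3 _ u y u](B3_sym23 _ _ _ _ S).
ring.
Qed.

Lemma rem_id y : let u := G2v y + G3v y in let x := y + u in
  T0 V lam x - (2^-1 * \sum_a lam a * y 0 a ^+ 2 + c3 o o o * y 0 o ^+ 3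
     + K o o o o * y 0 o ^+ 4)
  = 2^-1 * \sum_a lam a * (u 0 a ^+ 2 - G2 a y ^+ 2)
    + 2^-1 * B3 (D3 V) (G3v y) y y + 2^-1 * B3 (D3 V) u u y
    + 6^-1 * B3 (D3 V) u u u
    + 24^-1 * (B4 (D4 V) x x x x - B4 (D4 V) y y y y).
Proof.
move=> u x.
have Cu : 6^-1 * B3 (D3 V) y y y + \sum_a lam a * y 0 a * G2 a y =
    c3 o o o * y 0 o ^+ 3 by rewrite -B3_cZ; exact: cubic.
have Qu := quartic y; rewrite -F_K /F in Qu.
rewrite -Cu -Qu /T0 B2_D2.
have Ex : \sum_a lam a * x 0 a ^+ 2 = \sum_a lam a * y 0 a ^+ 2
   + 2 * \sum_a lam a * y 0 a * G2 a y + 2 * \sum_a lam a * y 0 a * Gc3 a y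
   + \sum_a lam a * G2 a y ^+ 2 + \sum_a lam a * (u 0 a ^+ 2 - G2 a y ^+ 2).
  rewrite !mulr_sumr -!big_split; apply: eq_bigr => a _ /=.
  rewrite /x /u !mxE; ring.
have Eu : B3 (D3 V) u y y = B3 (D3 V) (G2v y) y y + B3 (D3 V) (G3v y) y y.
  by rewrite /u B3_D1.
have E3 := B3_cube _ y u (D3_sym V).
rewrite Ex E3 Eu; by field.
Qed.


Lemma le_eq (a b : R) : a = b -> a <= b. Proof. by move->. Qed.

Lemma le_sum_term (F : I -> R) j : (forall i, 0 <= F i) -> F j <= \sum_i F i.
Proof.
move=> F0; rewrite (bigD1 j) //= lerDl; exact: sumr_ge0.
Qed.

Definition MA := \sum_i S2 (A i).
Definition MB := \sum_i S3 (Bc i).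
Definition M := MA + MB + 1.
Definition L := \sum_a `|lam a|.

Lemma MA_ge0 : 0 <= MA. Proof. by apply: sumr_ge0 => i _; exact: S2_ge0. Qed.
Lemma MB_ge0 : 0 <= MB. Proof. by apply: sumr_ge0 => i _; exact: S3_ge0. Qed.
Lemma M_ge1 : 1 <= M.
Proof. by rewrite /M lerDr addr_ge0 // ?MA_ge0 ?MB_ge0. Qed.
Lemma M_ge0 : 0 <= M. Proof. exact: le_trans ler01 M_ge1. Qed.
Lemma L_ge0 : 0 <= L. Proof. by apply: sumr_ge0. Qed.

Lemma G2_b i y : `|G2 i y| <= M * `|y| ^+ 2.
Proof.
apply: le_trans (B2_bound _ _ _) _; rewrite expr2.
apply: ler_wpM2r; first by rewrite mulr_ge0.
apply: le_trans (_ : MA <= M).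
  by apply: le_sum_term => j; exact: S2_ge0.
by rewrite /M -addrA lerDl addr_ge0 // MB_ge0.
Qed.

Lemma Gc3_b i y : `|Gc3 i y| <= M * `|y| ^+ 3.
Proof.
apply: le_trans (B3_bound _ _ _ _) _.
have -> : `|y| ^+ 3 = `|y| * `|y| * `|y| by rewrite !exprS expr0 mulr1 mulrA.
apply: ler_wpM2r; first by rewrite !mulr_ge0.
apply: le_trans (_ : MB <= M).
  by apply: le_sum_term => j; exact: S3_ge0.
by rewrite /M; have := MA_ge0; lra.
Qed.

Lemma G2v_b y : `|G2v y| <= M * `|y| ^+ 2.
Proof.
apply: norm_le; first by rewrite mulr_ge0 ?M_ge0 ?exprn_ge0.
by move=> i; rewrite mxE G2_b.
Qed.

Lemma G3v_b y : `|G3v y| <= M * `|y| ^+ 3.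
Proof.
apply: norm_le; first by rewrite mulr_ge0 ?M_ge0 ?exprn_ge0.
by move=> i; rewrite mxE Gc3_b.
Qed.

Lemma t3_le2 (t : R) : 0 <= t -> t <= 1 -> t ^+ 3 <= t ^+ 2.
Proof. by move=> t0 t1; rewrite exprS ler_piMl // exprn_ge0. Qed.

Lemma u_b y : `|y| <= 1 -> `|G2v y + G3v y| <= 2 * M * `|y| ^+ 2.
Proof.
move=> y1; apply: le_trans (ler_normD _ _) _.
have := G3v_b y; have := G2v_b y.
have := t3_le2 _ (normr_ge0 y) y1.
have := M_ge0; nra.
Qed.

Lemma x_b y : `|y| <= 1 -> `|y + (G2v y + G3v y)| <= 3 * M * `|y|.
Proof.
move=> y1; apply: le_trans (ler_normD _ _) _.
have := u_b y y1; have := M_ge1; have := normr_ge0 y.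
have := ler_wpM2l (mulr_ge0 M_ge0 (normr_ge0 y)) y1.
rewrite expr2 mulr1; nra.
Qed.


Lemma le3 {a b c a' b' c' : R} : 0 <= a -> 0 <= b -> 0 <= c ->
  a <= a' -> b <= b' -> c <= c' -> a * b * c <= a' * b' * c'.
Proof.
move=> a0 b0 c0 aa bb cc; apply: ler_pM => //; first by rewrite mulr_ge0.
exact: ler_pM.
Qed.

Lemma le4 {a b c d a' b' c' d' : R} : 0 <= a -> 0 <= b -> 0 <= c -> 0 <= d ->
  a <= a' -> b <= b' -> c <= c' -> d <= d' -> a * b * c * d <= a' * b' * c' * d'.
Proof.
move=> a0 b0 c0 d0 aa bb cc dd; apply: ler_pM => //; first by rewrite !mulr_ge0.
exact: le3.
Qed.

Lemma B4_tel c (y u : rv) : B4 c (y + u) (y + u) (y + u) (y + u) - B4 c y y y y =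
  B4 c u (y + u) (y + u) (y + u) + B4 c y u (y + u) (y + u)
  + B4 c y y u (y + u) + B4 c y y y u.
Proof.
have [x hx] : exists x, x = y + u by exists (y + u).
rewrite -hx.
have e1 := B4_D1 c y u x x x; rewrite -hx in e1.
have e2 := B4_D2 c y y u x x; rewrite -hx in e2.
have e3 := B4_D3 c y y y u x; rewrite -hx in e3.
have e4 := B4_D4 c y y y y u; rewrite -hx in e4.
rewrite e1 e2 e3 e4; ring.
Qed.

Section Pieces.
Variable y : rv.
Hypothesis y1 : `|y| <= 1.
Local Notation t := (`|y|).
Local Notation u := (G2v y + G3v y).
Local Notation x := (y + (G2v y + G3v y)).

Lemma t0 : 0 <= t. Proof. exact: normr_ge0. Qed.
Lemma hu : `|u| <= 2 * M * t ^+ 2. Proof. exact: u_b. Qed.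
Lemma hx : `|x| <= 3 * M * t. Proof. exact: x_b. Qed.
Lemma hy : t <= 3 * M * t.
Proof. have := M_ge1; have := t0; nra. Qed.
Lemma t65 : t ^+ 6 <= t ^+ 5.
Proof. by rewrite exprS ler_piMl // exprn_ge0 // t0. Qed.

Lemma P1b : `|\sum_a lam a * (u 0 a ^+ 2 - G2 a y ^+ 2)| <= L * (3 * M ^+ 2 * t ^+ 5).
Proof.
apply: le_trans (ler_norm_sum _ _ _) _; rewrite /L mulr_suml.
apply: ler_sum => a _; rewrite normrM; apply: ler_wpM2l => //.
rewrite mxE [G2v y 0 a]mxE [G3v y 0 a]mxE.
have h2 := G2_b a y; have h3 := Gc3_b a y.
have e : (G2 a y + Gc3 a y) ^+ 2 - G2 a y ^+ 2 = Gc3 a y * (2 * G2 a y + Gc3 a y)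
  by ring.
rewrite e normrM.
have hq : `|2 * G2 a y + Gc3 a y| <= 3 * M * t ^+ 2.
  apply: le_trans (ler_normD _ _) _; rewrite normrM ger0_norm //.
  have := t3_le2 _ t0 y1; have := M_ge0; nra.
apply: le_trans (ler_pM (normr_ge0 _) (normr_ge0 _) h3 hq) _.
by apply: le_eq; ring.
Qed.

Lemma P2b : `|B3 (D3 V) (G3v y) y y| <= S3 (D3 V) * (M * t ^+ 5).
Proof.
apply: le_trans (B3_bound _ _ _ _) _; apply: ler_wpM2l; first exact: S3_ge0.
apply: le_trans (le3 (normr_ge0 _) t0 t0 (G3v_b y) (lexx t) (lexx t)) _.
by apply: le_eq; ring.
Qed.

Lemma P3b : `|B3 (D3 V) u u y| <= S3 (D3 V) * (4 * M ^+ 2 * t ^+ 5).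
Proof.
apply: le_trans (B3_bound _ _ _ _) _; apply: ler_wpM2l; first exact: S3_ge0.
apply: le_trans (le3 (normr_ge0 _) (normr_ge0 _) t0 hu hu (lexx t)) _.
by apply: le_eq; ring.
Qed.

Lemma P4b : `|B3 (D3 V) u u u| <= S3 (D3 V) * (8 * M ^+ 3 * t ^+ 5).
Proof.
apply: le_trans (B3_bound _ _ _ _) _; apply: ler_wpM2l; first exact: S3_ge0.
apply: le_trans (le3 (normr_ge0 _) (normr_ge0 _) (normr_ge0 _) hu hu hu) _.
have -> : 2 * M * t ^+ 2 * (2 * M * t ^+ 2) * (2 * M * t ^+ 2) =
  8 * M ^+ 3 * t ^+ 6 by ring.
apply: ler_wpM2l; last exact: t65.
by rewrite mulr_ge0 // exprn_ge0 // M_ge0.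
Qed.

Lemma P5b : `|B4 (D4 V) x x x x - B4 (D4 V) y y y y| <=
  S4 (D4 V) * (216 * M ^+ 4 * t ^+ 5).
Proof.
rewrite B4_tel.
have b : forall p q r s : rv, `|p| <= 3 * M * t -> `|q| <= 3 * M * t ->
   `|r| <= 3 * M * t -> `|s| <= 3 * M * t ->
   (`|p| <= 2 * M * t ^+ 2 \/ `|q| <= 2 * M * t ^+ 2 \/
    `|r| <= 2 * M * t ^+ 2 \/ `|s| <= 2 * M * t ^+ 2) ->
   `|B4 (D4 V) p q r s| <= S4 (D4 V) * (54 * M ^+ 4 * t ^+ 5).
  move=> p q r s hp hq hr hs H.
  apply: le_trans (B4_bound _ _ _ _ _) _; apply: ler_wpM2l; first exact: S4_ge0.
  have e : 54 * M ^+ 4 * t ^+ 5 = 2 * M * t ^+ 2 * (3 * M * t) * (3 * M * t) * (3 * M * t)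
    by ring.
  have e2 : 2 * M * t ^+ 2 * (3 * M * t) * (3 * M * t) * (3 * M * t) =
    (3 * M * t) * (2 * M * t ^+ 2) * (3 * M * t) * (3 * M * t) by ring.
  have e3 : 2 * M * t ^+ 2 * (3 * M * t) * (3 * M * t) * (3 * M * t) =
    (3 * M * t) * (3 * M * t) * (2 * M * t ^+ 2) * (3 * M * t) by ring.
  have e4 : 2 * M * t ^+ 2 * (3 * M * t) * (3 * M * t) * (3 * M * t) =
    (3 * M * t) * (3 * M * t) * (3 * M * t) * (2 * M * t ^+ 2) by ring.
  rewrite e; case: H => [h|[h|[h|h]]].
  - exact: le4.
  - by rewrite e2; apply: le4.
  - by rewrite e3; apply: le4.
  - by rewrite e4; apply: le4.
have huu : `|u| <= 3 * M * t.
  apply: le_trans hu _; have := t3_le2 _ t0 y1; have := M_ge1; have := t0.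
  rewrite expr2; move=> ? ? _; have := ler_wpM2l (mulr_ge0 M_ge0 t0) y1; nra.
apply: le_trans (ler_normD _ _) _; apply: le_trans (lerD (ler_normD _ _) (lexx _)) _.
apply: le_trans (lerD (lerD (ler_normD _ _) (lexx _)) (lexx _)) _.
have B1' := b _ _ _ _ huu hx hx hx (or_introl hu).
have B2' := b _ _ _ _ hy huu hx hx (or_intror (or_introl hu)).
have B3' := b _ _ _ _ hy hy huu hx (or_intror (or_intror (or_introl hu))).
have B4' := b _ _ _ _ hy hy hy huu (or_intror (or_intror (or_intror hu))).
have := S4_ge0 (D4 V); lra.
Qed.

End Pieces.


Definition Cst := L * (3 * M ^+ 2) + S3 (D3 V) * M + S3 (D3 V) * (4 * M ^+ 2)
  + S3 (D3 V) * (8 * M ^+ 3) + S4 (D4 V) * (216 * M ^+ 4) + 1.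

Lemma Cst_gt0 : 0 < Cst.
Proof.
rewrite /Cst; have := L_ge0; have := S3_ge0 (D3 V); have := S4_ge0 (D4 V).
have := M_ge1; move=> h1 h2 h3 h4.
have : 0 <= L * (3 * M ^+ 2) by rewrite mulr_ge0 // mulr_ge0 // exprn_ge0 // M_ge0.
have : 0 <= S3 (D3 V) * M by rewrite mulr_ge0 // M_ge0.
have : 0 <= S3 (D3 V) * (4 * M ^+ 2) by rewrite mulr_ge0 // mulr_ge0 // exprn_ge0 // M_ge0.
have : 0 <= S3 (D3 V) * (8 * M ^+ 3) by rewrite mulr_ge0 // mulr_ge0 // exprn_ge0 // M_ge0.
have : 0 <= S4 (D4 V) * (216 * M ^+ 4) by rewrite mulr_ge0 // mulr_ge0 // exprn_ge0 // M_ge0.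
lra.
Qed.

Lemma rem_b y : `|y| <= 1 ->
  `|T0 V lam (y + (G2v y + G3v y)) - (2^-1 * \sum_a lam a * y 0 a ^+ 2
     + c3 o o o * y 0 o ^+ 3 + K o o o o * y 0 o ^+ 4)| <= Cst * `|y| ^+ 5.
Proof.
move=> y1.
have E := rem_id y; cbv zeta in E; rewrite E.
have h1 := P1b y y1; have h2 := P2b y; have h3 := P3b y y1; have h4 := P4b y y1.
have h5 := P5b y y1.
have n1 := normr_ge0 (\sum_a lam a * ((G2v y + G3v y) 0 a ^+ 2 - G2 a y ^+ 2)).
have n2 := normr_ge0 (B3 (D3 V) (G3v y) y y).
have n3 := normr_ge0 (B3 (D3 V) (G2v y + G3v y) (G2v y + G3v y) y).
have n4 := normr_ge0 (B3 (D3 V) (G2v y + G3v y) (G2v y + G3v y) (G2v y + G3v y)).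
have n5 := normr_ge0 (B4 (D4 V) (y + (G2v y + G3v y)) (y + (G2v y + G3v y))
  (y + (G2v y + G3v y)) (y + (G2v y + G3v y)) - B4 (D4 V) y y y y).
apply: le_trans (ler_normD _ _) _.
apply: le_trans (lerD (ler_normD _ _) (lexx _)) _.
apply: le_trans (lerD (lerD (ler_normD _ _) (lexx _)) (lexx _)) _.
apply: le_trans (lerD (lerD (lerD (ler_normD _ _) (lexx _)) (lexx _)) (lexx _)) _.
rewrite !normrM.
have c2 : `|2^-1 : R| = 2^-1 by rewrite ger0_norm.
have c6 : `|6^-1 : R| = 6^-1 by rewrite ger0_norm.
have c24 : `|24^-1 : R| = 24^-1 by rewrite ger0_norm.
rewrite c2 c6 c24.
have t5 : 0 <= `|y| ^+ 5 by rewrite exprn_ge0.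
rewrite /Cst !mulrDl mul1r.
rewrite -!mulrA in h1 h2 h3 h4 h5 *.
lra.
Qed.

End Main.

Theorem proposition2p8 (R : realType) (n : nat) (V : 'rV[R]_n.+2 -> R)
  (lam : 'I_n.+2 -> R) :
  Ck 4 V ->
  V 0 = 0 ->
  (forall i : 'I_n.+2, partial i V 0 = 0) ->
  (forall i j : 'I_n.+2,
      partial i (partial j V) 0 = if i == j then lam i else 0) ->
  lam ord0 = 0 ->
  lam (inord 1) != 0 ->
  (forall i : 'I_n.+2, (2 <= i)%N -> 0 < lam i) ->
  let p1 := @ord0 n.+1 in
  let V111 := 6^-1 * partial p1 (partial p1 (partial p1 V)) 0 in
  let V1111 := 24^-1 * partial p1 (partial p1 (partial p1 (partial p1 V))) 0 in
  let V11 (j : 'I_n.+2) := 2^-1 * partial p1 (partial p1 (partial j V)) 0 in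
  let C3 := V111 in
  let C4 := V1111 - 2^-1 * \sum_(j : 'I_n.+2 | (1 <= j)%N) (V11 j ^+ 2 / lam j) in
  exists (a : 'I_n.+2 -> 'I_n.+2 -> 'I_n.+2 -> R)
         (b : 'I_n.+2 -> 'I_n.+2 -> 'I_n.+2 -> 'I_n.+2 -> R),
    let g (y : 'rV[R]_n.+2) : 'rV[R]_n.+2 :=
      \row_(i < n.+2)
        (\sum_(j < n.+2) \sum_(k < n.+2) a i j k * y 0 j * y 0 k
         + \sum_(j < n.+2) \sum_(k < n.+2) \sum_(l < n.+2)
              b i j k l * y 0 j * y 0 k * y 0 l) in
    (fun y : 'rV[R]_n.+2 =>
       V (y + g y)
       - (2^-1 * \sum_(i : 'I_n.+2 | (1 <= i)%N) lam i * y 0 i ^+ 2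
          + C3 * y 0 p1 ^+ 3 + C4 * y 0 p1 ^+ 4))
      =o_ (nbhs (0 : 'rV[R]_n.+2)) (fun y : 'rV[R]_n.+2 => `|y| ^+ 4).
Proof.
move=> HC HV0 Hd1 Hd2 Hl0 Hl1 Hl2 p1 V111 V1111 V11 C3 C4.
exists (A V lam), (Bc V lam) => g.
have gE : forall y, g y = G2v V lam y + G3v V lam y.
  by move=> y; apply/matrixP => i j; rewrite !mxE.
have bl : forall j : 'I_n.+2, (1 <= j)%N = (j != ord0).
  by move=> j; rewrite lt0n.
have C3E : C3 = c3 V ord0 ord0 ord0.
  by rewrite /C3 /V111 /c3 D3_sorted.
have C4E : C4 = K V lam ord0 ord0 ord0 ord0.
  rewrite K0 // /C4 /V1111 /V11 D4_sorted //; congr (_ - _ * _).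
  rewrite (eq_bigl _ _ bl); apply: eq_bigr => j _; rewrite D3_sorted //.
have QE : forall y : 'rV[R]_n.+2,
  2^-1 * \sum_(i : 'I_n.+2 | (1 <= i)%N) lam i * y 0 i ^+ 2 =
  2^-1 * \sum_a lam a * y 0 a ^+ 2.
  move=> y; congr (_ * _); rewrite [RHS](bigD1 ord0) //= Hl0 mul0r add0r.
  exact: eq_bigl.
apply/eqoP => eps eps0.
set Mv := M V lam.
have M1 : 1 <= Mv := M_ge1 V lam.
have M0 : 0 < Mv by apply: lt_le_trans M1.
have M30 : 0 < 3 * Mv by rewrite mulr_gt0.
pose e1 := eps / (2 * (3 * Mv) ^+ 4).
have e10 : 0 < e1 by rewrite divr_gt0 // mulr_gt0 // exprn_gt0.
have [d1 d10 Hd] := taylor4 V lam HC Hd1 Hd2 HV0 e1 e10.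
set C := Cst V lam.
have C0 : 0 < C := Cst_gt0 V lam.
have dd0 : 0 < d1 / (3 * Mv) by rewrite divr_gt0.
have de0 : 0 < eps / (2 * C) by rewrite divr_gt0 // mulr_gt0.
have d0 : 0 < Num.min 1 (Num.min (d1 / (3 * Mv)) (eps / (2 * C))).
  by rewrite /= !lt_min ltr01 dd0 de0.
apply: (filterS _ (nbhs0_lt d0)) => y /= yd.
move: yd; rewrite !lt_min => /and3P[y1 yd1 yde].
have y1' : `|y| <= 1 by apply: ltW.
rewrite gE QE C3E C4E.
set x := y + (G2v V lam y + G3v V lam y).
have hx : `|x| <= 3 * Mv * `|y| := x_b V lam y y1'.
have hxd : `|x| < d1.
  apply: le_lt_trans hx _.
  have : 3 * Mv * `|y| < 3 * Mv * (d1 / (3 * Mv)) by rewrite ltr_pM2l.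
  by rewrite [3 * Mv * (d1 / _)]mulrC divfK // gt_eqF.
have T := Hd x hxd.
have Rb := rem_b V lam Hl0 Hl1 Hl2 y y1'.
have n4 : `|(`|y| ^+ 4)| = `|y| ^+ 4 by rewrite ger0_norm // exprn_ge0.
rewrite n4.
set tg := (X in V x - X).
have -> : V x - tg = (V x - T0 V lam x) + (T0 V lam x - tg) by rewrite addrA subrK.
apply: le_trans (ler_normD _ _) _.
have B1 : e1 * `|x| ^+ 4 <= eps / 2 * `|y| ^+ 4.
  apply: le_trans (_ : e1 * (3 * Mv * `|y|) ^+ 4 <= _).
    apply: ler_wpM2l; first exact: ltW.
    by apply: lerXn2r; rewrite ?nnegrE // mulr_ge0 // ltW.
  apply: le_eq; rewrite /e1 exprMn; field.
  by rewrite gt_eqF.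
have B2 : C * `|y| ^+ 5 <= eps / 2 * `|y| ^+ 4.
  rewrite exprS mulrA; apply: ler_wpM2r; first exact: exprn_ge0.
  have : C * `|y| <= C * (eps / (2 * C)) by apply: ler_wpM2l; [exact: ltW | exact: ltW].
  move/le_trans; apply; apply: le_eq; field; by rewrite gt_eqF.
have := le_trans T B1; have := le_trans Rb B2.
lra.
Qed.
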